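(* Let $n$ be a positive integer. (1) For $q>2$, $$\tilde\psi^{(n)}(q)=\frac12(-1)^{n+1}(n-1)!\left(\frac1{(q-2)^n}-\frac1{(q-1)^n}\right)+(-1)^n\sum_{k=1}^\infty\frac{2^k(n+k)!}{(k+1)!}\,\zeta_E(n+k+1,q).$$ (2) For $q>1$, $$\tilde\psi^{(n)}(q)=\frac12(-1)^{n+1}(n-1)!\left(\frac1{(q-1)^n}-\frac1{q^n}\right)+(-1)^n\sum_{k=1}^\infty\frac{(n+2k)!}{(2k+1)!}\,\zeta_E(n+2k+1,q).$$
   Context: For $q>0$, $\zeta_E(z,q)=\sum_{n=0}^\infty (-1)^n (n+q)^{-z}$ for $\mathrm{Re}(z)>0$, extended by analytic continuation to an entire function of $z$. The modified digamma function is $\tilde\psi(q):=-\zeta_E(1,q)=-\sum_{n\ge0}\frac{(-1)^n}{n+q}$ for $q>0$, and $\tilde\psi^{(n)}$ denotes its $n$-th derivative in $q$. *)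

(* Defs.v *)
From Stdlib Require Import Reals.
From Coquelicot Require Import Coquelicot.
Open Scope R_scope.

(* For Re z > 0 the series converges and equals the analytic continuation;
   the statement only uses z = 1 and integer z >= 3. *)
Definition zetaE (z q : R) : R :=
  Series (fun m : nat => (-1) ^ m * Rpower (INR m + q) (- z)).

Definition psiE (q : R) : R := - zetaE 1 q.

(* Main.v *)
Require Import Defs.
From Stdlib Require Import Reals Lra Lia Ranalysis5.
From Coquelicot Require Import Coquelicot.
Open Scope R_scope.

Lemma alt_base (a : nat -> R) :
  (forall m, 0 <= a (S m) <= a m) -> is_lim_seq a 0 ->
  ex_series (fun m => (-1)^m * a m) /\
  Rabs (Series (fun m => (-1)^m * a m)) <= a O.
Proof.
  intros Hd Hl.
  assert (Hdec : Un_decreasing a) by (intro m; apply Hd).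
  assert (Hcv : Un_cv a 0) by (apply is_lim_seq_Reals; exact Hl).
  destruct (alternated_series a Hdec Hcv) as [l Hlim].
  assert (Hs : is_series (fun m => (-1)^m * a m) l).
  { apply is_series_Reals. exact Hlim. }
  split. { exists l; exact Hs. }
  rewrite (is_series_unique _ _ Hs).
  pose proof (alternated_series_ineq a l 0 Hdec Hcv Hlim) as [H1 H2].
  simpl in H1, H2. unfold tg_alt in H1, H2. simpl in H1, H2.
  pose proof (Hd O).
  apply Rabs_le. lra.
Qed.

Lemma tail_series (u : nat -> R) (l : R) (M : nat) :
  is_series u l -> is_series (fun k => u (S M + k)%nat) (l - sum_n u M).
Proof.
  intro H. apply is_series_incr_n. lia. simpl.
  match goal with |- is_series _ ?x => replace x with l end. exact H.
  unfold plus; simpl. change (l = l - sum_n u M + sum_n u M). ring.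
Qed.

Lemma alt_rem (a : nat -> R) :
  (forall m, 0 <= a (S m) <= a m) -> is_lim_seq a 0 ->
  ex_series (fun m => (-1)^m * a m) /\
  forall M, Rabs (Series (fun m => (-1)^m * a m) - sum_n (fun m => (-1)^m * a m) M) <= a (S M).
Proof.
  intros Hd Hl.
  destruct (alt_base a Hd Hl) as [Hex _].
  split; [exact Hex|].
  intro M.
  pose proof (tail_series _ _ M (Series_correct _ Hex)) as Ht.
  destruct (alt_base (fun k => a (S M + k)%nat)) as [Hex2 Hb].
  { intro m. replace (S M + S m)%nat with (S (S M + m)) by lia. apply Hd. }
  { apply (is_lim_seq_incr_n a (S M)) in Hl.
    eapply is_lim_seq_ext; [|exact Hl]. intro n; simpl. f_equal; lia. }
  pose proof (is_series_scal_l ((-1)^(S M)) _ _ (Series_correct _ Hex2)) as H3.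
  assert (E : Series (fun m => (-1)^m * a m) - sum_n (fun m => (-1)^m * a m) M
             = (-1)^(S M) * Series (fun k => (-1)^k * a (S M + k)%nat)).
  { apply (is_series_unique _ _) in Ht. rewrite <- Ht. apply is_series_unique.
    eapply is_series_ext; [|exact H3]. intro n. unfold scal; simpl. unfold mult; simpl.
    rewrite pow_add. ring. }
  rewrite E, Rabs_mult, pow_1_abs, Rmult_1_l.
  replace (a (S M)) with (a (S M + 0)%nat) by (f_equal; lia). exact Hb.
Qed.


Definition zs (k : nat) (q : R) (m : nat) : R := (-1)^m * / (INR m + q)^k.
Definition Z (k : nat) (q : R) : R := Series (zs k q).

Lemma inv_lim (k : nat) (q : R) : 0 < q -> (1 <= k)%nat ->
  is_lim_seq (fun m => / (INR m + q)^k) 0.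
Proof.
  intros Hq Hk.
  apply is_lim_seq_incr_1.
  apply (is_lim_seq_le_le (fun _ => 0) _ (fun m => / INR (S m))).
  - intro m. pose proof (pos_INR m). rewrite S_INR. split.
    + left; apply Rinv_0_lt_compat, pow_lt; lra.
    + apply Rinv_le_contravar. lra.
      apply Rle_trans with ((INR m + 1 + q)^1). simpl; lra.
      apply Rle_pow; [lra|exact Hk].
  - apply is_lim_seq_const.
  - apply (is_lim_seq_incr_1 (fun m => / INR m)).
    replace (Finite 0) with (Rbar_inv p_infty) by reflexivity.
    apply is_lim_seq_inv. apply is_lim_seq_INR. discriminate.
Qed.

Lemma inv_dec (k : nat) (q : R) : 0 < q -> forall m, 0 <= / (INR (S m) + q)^k <= / (INR m + q)^k.
Proof.
  intros Hq m. pose proof (pos_INR m). rewrite S_INR. split.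
  - left; apply Rinv_0_lt_compat, pow_lt; lra.
  - apply Rinv_le_contravar. apply pow_lt; lra. apply pow_incr; lra.
Qed.

Lemma Z_props (k : nat) (q : R) : 0 < q -> (1 <= k)%nat ->
  is_series (zs k q) (Z k q) /\ Rabs (Z k q) <= / q^k /\
  forall M, Rabs (Z k q - sum_n (zs k q) M) <= / (INR (S M) + q)^k.
Proof.
  intros Hq Hk.
  destruct (alt_rem (fun m => / (INR m + q)^k) (inv_dec k q Hq) (inv_lim k q Hq Hk)) as [Hex Hr].
  destruct (alt_base (fun m => / (INR m + q)^k) (inv_dec k q Hq) (inv_lim k q Hq Hk)) as [_ Hb].
  split; [|split].
  - apply Series_correct. exact Hex.
  - simpl in Hb. rewrite Rplus_0_l in Hb. exact Hb.
  - exact Hr.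
Qed.

Lemma Z_shift (k : nat) (q : R) : 0 < q -> (1 <= k)%nat ->
  Z k q = / q^k - Z k (q + 1).
Proof.
  intros Hq Hk.
  destruct (Z_props k q Hq Hk) as [H _].
  assert (H1 : is_series (fun m => zs k q (S m)) (Z k q - / q^k)).
  { apply is_series_incr_1.
    match goal with |- is_series _ ?x => replace x with (Z k q) end. exact H.
    unfold plus, zs; simpl. change (Z k q = Z k q - / q^k + 1 * / (0 + q)^k). rewrite Rplus_0_l. ring. }
  destruct (Z_props k (q+1) ltac:(lra) Hk) as [H2 _].
  apply is_series_opp in H2.
  assert (E : Z k q - / q^k = opp (Z k (q+1))).
  { apply is_series_unique in H1. rewrite <- H1. apply is_series_unique.
    eapply is_series_ext; [|exact H2]. intro n. unfold opp, zs; simpl.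
    change (- ((-1)^n * / (INR n + (q+1))^k) = -1 * (-1)^n * / (INR (S n) + q)^k).
    rewrite S_INR. replace (INR n + 1 + q) with (INR n + (q + 1)) by ring. ring. }
  unfold opp in E; simpl in E. lra.
Qed.


Lemma key (c : nat -> R) (s : nat -> nat) (q : R) (G : nat -> R) (L : R) :
  0 < q -> (forall j, 0 <= c j) -> (forall j, 1 <= s j)%nat ->
  (forall m, is_series (fun j => c j * / (INR m + q)^(s j)) (G m)) ->
  is_series (fun m => (-1)^m * G m) L ->
  is_series (fun j => c j * Z (s j) q) L.
Proof.
  intros Hq Hc Hs HG HL.
  assert (Hpart : forall M, is_series (fun j => c j * sum_n (zs (s j) q) M)
                                      (sum_n (fun m => (-1)^m * G m) M)).
  { induction M.
    - rewrite sum_O. pose proof (is_series_scal_l ((-1)^0) _ _ (HG O)) as H0.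
      eapply is_series_ext; [|exact H0]. intro j. rewrite sum_O. unfold zs, scal; simpl.
      unfold mult; simpl. ring.
    - rewrite sum_Sn. pose proof (is_series_scal_l ((-1)^(S M)) _ _ (HG (S M))) as H1.
      pose proof (is_series_plus _ _ _ _ IHM H1) as H2.
      eapply is_series_ext; [|exact H2]. intro j. rewrite sum_Sn. unfold zs, scal, plus; simpl.
      unfold mult, plus; simpl. ring. }
  assert (HZ : forall j, is_series (zs (s j) q) (Z (s j) q) /\ Rabs (Z (s j) q) <= / q^(s j) /\
     forall M, Rabs (Z (s j) q - sum_n (zs (s j) q) M) <= / (INR (S M) + q)^(s j)).
  { intro j. apply Z_props; auto. }
  assert (Hex : ex_series (fun j => c j * Z (s j) q)).
  { apply (@ex_series_le R_AbsRing R_CompleteNormedModule _ (fun j => c j * / (INR 0 + q)^(s j))).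
    - intro j. change (norm (c j * Z (s j) q)) with (Rabs (c j * Z (s j) q)).
      rewrite Rabs_mult, (Rabs_pos_eq (c j) (Hc j)). simpl INR. rewrite Rplus_0_l.
      apply Rmult_le_compat_l; [apply Hc|]. apply HZ.
    - exists (G O). apply HG. }
  assert (Hbnd : forall M, Rabs (Series (fun j => c j * Z (s j) q) - sum_n (fun m => (-1)^m * G m) M) <= G (S M)).
  { intro M.
    pose proof (is_series_minus _ _ _ _ (Series_correct _ Hex) (Hpart M)) as H1.
    apply is_series_unique in H1.
    change (plus (Series (fun j => c j * Z (s j) q)) (opp (sum_n (fun m => (-1)^m * G m) M)))
      with (Series (fun j => c j * Z (s j) q) - sum_n (fun m => (-1)^m * G m) M) in H1.
    rewrite <- H1.
    assert (Hle : forall j, Rabs (plus (c j * Z (s j) q) (opp (c j * sum_n (zs (s j) q) M)))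
                            <= c j * / (INR (S M) + q)^(s j)).
    { intro j. change (plus (c j * Z (s j) q) (opp (c j * sum_n (zs (s j) q) M))) with
        (c j * Z (s j) q - c j * sum_n (zs (s j) q) M).
      rewrite <- Rmult_minus_distr_l, Rabs_mult, (Rabs_pos_eq (c j) (Hc j)).
      apply Rmult_le_compat_l; [apply Hc|]. apply HZ. }
    assert (Hexb : ex_series (fun j => c j * / (INR (S M) + q)^(s j))) by (exists (G (S M)); apply HG).
    eapply Rle_trans. apply Series_Rabs.
    { eapply (@ex_series_le R_AbsRing R_CompleteNormedModule); [|exact Hexb]. intro j. change (norm (Rabs ?x)) with (Rabs (Rabs x)).
      rewrite Rabs_Rabsolu. apply Hle. }
    rewrite <- (is_series_unique _ _ (HG (S M))).
    apply Series_le; [|exact Hexb]. intro j. split; [apply Rabs_pos|apply Hle]. }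
  pose proof (ex_series_lim_0 _ (ex_intro _ L HL)) as H0.
  apply is_lim_seq_abs in H0. simpl in H0. rewrite Rabs_R0 in H0.
  apply is_lim_seq_incr_1 in H0.
  set (Sr := Series (fun j => c j * Z (s j) q)) in *.
  assert (Hd : is_lim_seq (fun M => Sr - sum_n (fun m => (-1)^m * G m) M) 0).
  { apply (is_lim_seq_le_le (fun M => - Rabs ((-1)^(S M) * G (S M))) _ (fun M => Rabs ((-1)^(S M) * G (S M)))).
    - intro M. pose proof (Hbnd M) as HB.
      rewrite Rabs_mult, pow_1_abs, Rmult_1_l.
      assert (G (S M) <= Rabs (G (S M))) by apply Rle_abs.
      revert HB. unfold Rabs at 1. destruct Rcase_abs; intros; lra.
    - replace (Finite 0) with (Rbar_opp 0) by (simpl; f_equal; ring).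
      apply -> is_lim_seq_opp. exact H0.
    - exact H0. }
  assert (Hp : is_lim_seq (fun M => sum_n (fun m => (-1)^m * G m) M) Sr).
  { pose proof (is_lim_seq_minus' _ _ _ _ (is_lim_seq_const Sr) Hd) as H1.
    replace (Sr - 0) with Sr in H1 by ring.
    eapply is_lim_seq_ext; [|exact H1]. intro; simpl; ring. }
  assert (E : Sr = L).
  { assert (HL' : is_lim_seq (fun M => sum_n (fun m => (-1)^m * G m) M) L) by exact HL.
    apply is_lim_seq_unique in Hp. apply is_lim_seq_unique in HL'.
    rewrite Hp in HL'. injection HL'. auto. }
  rewrite <- E. apply Series_correct. exact Hex.
Qed.


Lemma term_derive (j m : nat) (y : R) : 0 < y ->
  is_derive (fun y => zs j y m) y (- INR j * zs (S j) y m).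
Proof.
  intro Hy. unfold zs. pose proof (pos_INR m).
  auto_derive. apply pow_nonzero; lra.
  destruct j as [|j]. simpl; ring.
  simpl Init.Nat.pred. change ((INR m + y) ^ S (S j)) with ((INR m + y) * ((INR m + y) * (INR m + y)^j)).
  change ((INR m + y) ^ S j) with ((INR m + y) * (INR m + y)^j).
  assert ((INR m + y)^j <> 0) by (apply pow_nonzero; lra).
  field. split; [auto|lra].
Qed.

Lemma sum_f_scal (c : R) (u : nat -> R) (N : nat) :
  sum_f_R0 (fun m => c * u m) N = c * sum_f_R0 u N.
Proof. induction N; simpl; [ring|rewrite IHN; ring]. Qed.

Lemma Z_derive (k : nat) (q : R) : 0 < q -> (1 <= k)%nat ->
  is_derive (Z k) q (- INR k * Z (S k) q).
Proof.
  intros Hq Hk.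
  set (r := mkposreal (q/2) ltac:(lra)).
  assert (HB : forall y, Boule q r y -> 0 < y).
  { intros y Hy. unfold Boule in Hy. simpl in Hy. apply Rabs_def2 in Hy. lra. }
  set (fn := fun N y => sum_f_R0 (fun m => zs k y m) N).
  set (fn' := fun N y => sum_f_R0 (fun m => - INR k * zs (S k) y m) N).
  set (g := fun y => - INR k * Z (S k) y).
  assert (Hd : forall y N, 0 < y -> is_derive (fn N) y (fn' N y)).
  { intros y N Hy. unfold fn, fn'. induction N.
    - simpl. apply term_derive; auto.
    - simpl. apply (is_derive_plus (fun y => sum_f_R0 (fun m => zs k y m) N) (fun y => zs k y (S N))).
      exact IHN. apply term_derive; auto. }
  assert (Hd' : forall y N, 0 < y -> is_derive (fn' N) y (sum_f_R0 (fun m => - INR k * (- INR (S k) * zs (S (S k)) y m)) N)).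
  { intros y N Hy. unfold fn'. induction N.
    - simpl. apply is_derive_scal. apply term_derive; auto.
    - simpl. apply (is_derive_plus (fun y => sum_f_R0 (fun m => - INR k * zs (S k) y m) N) (fun y => - INR k * zs (S k) y (S N))).
      exact IHN. apply is_derive_scal. apply term_derive; auto. }
  assert (Hcvu : CVU fn' g q r).
  { intros eps Heps.
    destruct (archimed_cor1 (eps / (INR k + 1))) as [N [HN HN0]].
    { apply Rdiv_lt_0_compat; auto. pose proof (pos_INR k); lra. }
    exists N. intros n y Hn Hy. pose proof (HB y Hy) as Hy0.
    destruct (Z_props (S k) y Hy0 ltac:(lia)) as [_ [_ Hr]].
    unfold g, fn'. rewrite sum_f_scal, <- Rmult_minus_distr_l, Rabs_mult, Rabs_Ropp, Rabs_pos_eq by apply pos_INR.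
    rewrite <- sum_n_Reals.
    pose proof (Hr n) as Hrn.
    assert (HINRN : 0 < INR N) by (apply lt_0_INR; lia).
    assert (H1 : / (INR (S n) + y) ^ S k <= / INR N).
    { apply Rinv_le_contravar; auto.
      apply Rle_trans with ((INR (S n) + y)^1).
      - rewrite pow_1. apply le_INR in Hn. rewrite S_INR. lra.
      - apply Rle_pow. rewrite S_INR; pose proof (pos_INR n); lra. lia. }
    pose proof (pos_INR k).
    apply Rle_lt_trans with (INR k * / INR N).
    { apply Rmult_le_compat_l; auto. eapply Rle_trans; [exact Hrn|exact H1]. }
    apply Rle_lt_trans with ((INR k + 1) * / INR N).
    { apply Rmult_le_compat_r. left; apply Rinv_0_lt_compat; auto. lra. }
    apply Rmult_lt_reg_l with (/ (INR k + 1)). apply Rinv_0_lt_compat; lra.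
    rewrite <- Rmult_assoc, Rinv_l by lra. rewrite Rmult_1_l.
    unfold Rdiv in HN. rewrite Rmult_comm in HN. exact HN. }
  assert (Hcont : forall y, Boule q r y -> continuity_pt g y).
  { apply (CVU_continuity fn' g q r Hcvu).
    intros n y Hy. apply continuity_pt_filterlim. apply (@ex_derive_continuous R_AbsRing R_NormedModule).
    eexists. apply Hd'. auto. }
  apply is_derive_Reals.
  apply (derivable_pt_lim_CVU fn fn' (Z k) g q q r).
  - unfold Boule. rewrite Rminus_eq_0, Rabs_R0. simpl; lra.
  - intros y n Hy. apply is_derive_Reals. apply Hd. auto.
  - intros y Hy. destruct (Z_props k y (HB y Hy) Hk) as [Hs _].
    apply is_series_Reals in Hs. exact Hs.
  - exact Hcvu.
  - exact Hcont.
Qed.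


Lemma zetaE_Z (k : nat) (q : R) : 0 < q -> zetaE (INR k) q = Z k q.
Proof.
  intro Hq. unfold zetaE, Z. apply Series_ext. intro m. unfold zs.
  rewrite Rpower_Ropp, Rpower_pow. reflexivity. pose proof (pos_INR m); lra.
Qed.

Lemma Dn_psi (n : nat) : forall q, 0 < q ->
  Derive_n psiE n q = (-1)^(n+1) * INR (Factorial.fact n) * Z (S n) q.
Proof.
  induction n; intros q Hq.
  - simpl. unfold psiE. replace 1 with (INR 1) by reflexivity. rewrite zetaE_Z by auto.
    simpl; ring.
  - simpl Derive_n.
    rewrite (Derive_ext_loc _ (fun y => (-1)^(n+1) * INR (Factorial.fact n) * Z (S n) y)).
    + apply is_derive_unique.
      replace ((-1) ^ (S n + 1) * INR (Factorial.fact (S n)) * Z (S (S n)) q)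
        with ((-1)^(n+1) * INR (Factorial.fact n) * (- INR (S n) * Z (S (S n)) q)).
      apply is_derive_scal, Z_derive; auto; lia.
      change (Factorial.fact (S n)) with (S n * Factorial.fact n)%nat.
      rewrite mult_INR. replace (S n + 1)%nat with (S (n+1)) by lia. simpl pow. ring.
    + apply (filter_imp (fun y => 0 < y)). intros y Hy. apply IHn; auto.
      apply (open_gt 0 q Hq).
Qed.


Lemma Dn_geom (m : nat) : forall t, t < 1 ->
  Derive_n (fun y => / (1 - y)) m t = INR (Factorial.fact m) / (1 - t)^(S m).
Proof.
  induction m; intros t Ht.
  - simpl. field. lra.
  - simpl Derive_n.
    rewrite (Derive_ext_loc _ (fun y => INR (Factorial.fact m) / (1 - y)^(S m))).
    + apply is_derive_unique. auto_derive. exact (pow_nonzero (1-t) (S m) ltac:(lra)).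
      change (Factorial.fact (S m)) with (S m * Factorial.fact m)%nat.
      change (match m with 0%nat => 1 | S _ => INR m + 1 end) with (INR (S m)).
      rewrite mult_INR, !S_INR. cbn [Init.Nat.pred pow].
      assert ((1-t)^m <> 0) by (apply pow_nonzero; lra).
      unfold Rminus in *. field. split; auto; lra.
    + apply (filter_imp (fun y => y < 1)). intros y Hy. apply IHm; auto.
      apply (open_lt 1 t Ht).
Qed.

Lemma negbin (m : nat) (t : R) : Rabs t < 1 ->
  is_series (fun j => INR (Factorial.fact (j + m)) / INR (Factorial.fact j) * t^j)
            (INR (Factorial.fact m) / (1 - t)^(S m)).
Proof.
  intro Ht.
  set (a := fun _ : nat => 1).
  assert (Hr : CV_radius a = 1).
  { rewrite (CV_radius_finite_DAlembert a 1).
    - simpl. f_equal. apply Rinv_1.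
    - intro; unfold a; lra.
    - lra.
    - eapply is_lim_seq_ext; [|apply is_lim_seq_const]. intro; unfold a. simpl.
      unfold Rdiv. rewrite Rinv_1, Rmult_1_l, Rabs_R1. reflexivity. }
  assert (Hlt : Rbar_lt (Rabs t) (CV_radius a)) by (rewrite Hr; exact Ht).
  pose proof (Derive_n_PSeries m a t Hlt) as HD.
  assert (Hex : ex_pseries (PS_derive_n m a) t).
  { apply CV_radius_inside. rewrite CV_radius_derive_n. exact Hlt. }
  assert (HDg : Derive_n (PSeries a) m t = INR (Factorial.fact m) / (1 - t)^(S m)).
  { assert (Ht1 : t < 1) by (apply Rabs_def2 in Ht; lra).
    rewrite <- (Dn_geom m t Ht1).
    apply Derive_n_ext_loc.
    apply (filter_imp (fun y => -1 < y /\ y < 1)).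
    - intros y [Hy1 Hy2]. unfold PSeries.
      rewrite <- Series_geom by (apply Rabs_def1; lra).
      apply Series_ext. intro k. unfold a. ring.
    - apply Rabs_def2 in Ht. apply filter_and.
      apply (open_gt (-1) t). lra. apply (open_lt 1 t). lra. }
  pose proof (PSeries_correct _ _ Hex) as Hs.
  rewrite <- HD in Hs. rewrite HDg in Hs.
  eapply is_series_ext; [|exact Hs]. intro k. unfold PS_derive_n, a.
  rewrite pow_n_pow. unfold scal; simpl. unfold mult; simpl. ring.
Qed.


Lemma incr1 (a : nat -> R) (L : R) : is_series a L -> is_series (fun k => a (S k)) (L - a O).
Proof.
  intro H. apply is_series_incr_1.
  match goal with |- is_series _ ?x => replace x with L end. exact H.
  unfold plus; simpl. ring.
Qed.

Lemma odd_extract (d : nat -> R) (l : R) : is_series d l -> (forall k, d (2 * k)%nat = 0) ->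
  is_series (fun k => d (2 * k + 1)%nat) l.
Proof.
  intros H Hev.
  assert (E : forall K, sum_n (fun k => d (2 * k + 1)%nat) K = sum_n d (2 * K + 1)).
  { induction K.
    - rewrite sum_O. simpl. rewrite sum_Sn, sum_O. simpl. unfold plus; simpl.
      pose proof (Hev O). simpl in H0. rewrite H0. ring.
    - rewrite sum_Sn, IHK. replace (2 * S K + 1)%nat with (S (S (2 * K + 1))) by lia.
      rewrite !sum_Sn. replace (S (2 * K + 1)) with (2 * S K)%nat by lia. rewrite Hev.
      replace (S (2 * S K)) with (2 * S K + 1)%nat by lia.
      unfold plus; simpl. ring. }
  unfold is_series.
  apply (filterlim_ext (fun K => sum_n d (2 * K + 1))).
  { intro K. rewrite E. reflexivity. }
  apply (is_lim_seq_subseq (sum_n d) l (fun K => (2 * K + 1)%nat)).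
  apply eventually_subseq. intro; lia. exact H.
Qed.

Lemma pow_ratio (x c : R) (n : nat) : x <> 0 -> x - c <> 0 ->
  / x^n * / (1 - c / x)^n = / (x - c)^n.
Proof.
  intros Hx Hxc. rewrite <- Rinv_mult. f_equal. rewrite <- Rpow_mult_distr. f_equal. field. auto.
Qed.


Lemma coef1 (n : nat) (x : R) : (0 < n)%nat -> 2 < x ->
  is_series (fun k => 2 ^ (S k) * INR (Factorial.fact (n + S k)) / INR (Factorial.fact (S k + 1))
                       * / x ^ (n + S k + 1))
    (/ 2 * (INR (Factorial.fact (n - 1)) * (/ (x - 2)^n - / x^n)
            - 2 * INR (Factorial.fact n) * / x ^ (n + 1))).
Proof.
  intros Hn Hx.
  assert (Ht : Rabs (2 / x) < 1).
  { rewrite Rabs_pos_eq. apply (Rmult_lt_reg_r x). lra. unfold Rdiv. rewrite Rmult_assoc, Rinv_l by lra. lra.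
    unfold Rdiv. apply Rmult_le_pos; [lra|]. left; apply Rinv_0_lt_compat; lra. }
  pose proof (negbin (n - 1) (2 / x) Ht) as H.
  replace (S (n - 1)) with n in H by lia.
  apply (is_series_scal_l (/ 2 * / x ^ n)) in H.
  apply incr1, incr1 in H.
  match type of H with is_series _ ?v => match goal with |- is_series _ ?w => replace w with v end end.
  eapply is_series_ext; [|exact H].
  - intro k. cbv beta.
    replace (S (S k) + (n - 1))%nat with (n + S k)%nat by lia.
    replace (S k + 1)%nat with (S (S k)) by lia.
    pose proof (INR_fact_neq_0 (S (S k))).
    set (F1 := INR (Factorial.fact (n + S k))). set (F2 := INR (Factorial.fact (S (S k)))).
    unfold scal; simpl. unfold mult; simpl.
    assert (x <> 0) by lra.
    rewrite <- !pow_inv.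
    replace (n + S k + 1)%nat with (n + S (S k))%nat by lia. rewrite pow_add.
    unfold Rdiv. rewrite Rpow_mult_distr.
    simpl pow. field. auto.
  - replace (1 + (n - 1))%nat with n by lia. replace (0 + (n - 1))%nat with (n - 1)%nat by lia.
    set (A := INR (Factorial.fact (n - 1))). set (B := INR (Factorial.fact n)).
    unfold scal; simpl. unfold mult; simpl.
    assert (x <> 0) by lra.
    assert (E := pow_ratio x 2 n ltac:(lra) ltac:(lra)).
    rewrite pow_add, pow_1.
    assert (x ^ n <> 0) by (apply pow_nonzero; auto).
    assert ((x - 2) ^ n <> 0) by (apply pow_nonzero; lra).
    assert ((1 - 2 / x) ^ n <> 0).
    { apply pow_nonzero. intro H3. apply (Rmult_eq_compat_l x) in H3.
      replace (x * (1 - 2 / x)) with (x - 2) in H3 by (field; auto). lra. }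
    rewrite <- E. simpl. field. auto.
Qed.


Lemma coef2 (n : nat) (x : R) : (0 < n)%nat -> 1 < x ->
  is_series (fun k => INR (Factorial.fact (n + 2 * S k)) / INR (Factorial.fact (2 * S k + 1))
                       * / x ^ (n + 2 * S k + 1))
    (/ 2 * INR (Factorial.fact (n - 1)) * (/ (x - 1)^n - / (x + 1)^n)
            - INR (Factorial.fact n) * / x ^ (n + 1)).
Proof.
  intros Hn Hx.
  assert (Hx0 : x <> 0) by lra.
  assert (Hi : 0 < / x < 1).
  { split. apply Rinv_0_lt_compat; lra. rewrite <- Rinv_1. apply Rinv_lt_contravar; lra. }
  assert (Ht1 : Rabs (/ x) < 1) by (rewrite Rabs_pos_eq; lra).
  assert (Ht2 : Rabs (- / x) < 1) by (rewrite Rabs_Ropp, Rabs_pos_eq; lra).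
  pose proof (is_series_minus _ _ _ _ (negbin (n - 1) (/ x) Ht1) (negbin (n - 1) (- / x) Ht2)) as H.
  replace (S (n - 1)) with n in H by lia.
  apply odd_extract in H.
  2:{ intro k. unfold plus, opp; simpl.
      replace (- / x) with ((-1) * / x) by ring. replace (k + (k + 0))%nat with (2 * k)%nat by lia. rewrite Rpow_mult_distr, pow_1_even. ring. }
  apply incr1 in H.
  apply (is_series_scal_l (/ 2 * / x ^ n)) in H.
  match type of H with is_series _ ?v => match goal with |- is_series _ ?w => replace w with v end end.
  eapply is_series_ext; [|exact H].
  - intro k. cbv beta.
    replace (2 * S k + 1 + (n - 1))%nat with (n + 2 * S k)%nat by lia.
    pose proof (INR_fact_neq_0 (2 * S k + 1)).
    set (F1 := INR (Factorial.fact (n + 2 * S k))). set (F2 := INR (Factorial.fact (2 * S k + 1))).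
    unfold scal, plus, opp; simpl. unfold mult; simpl.
    replace (- / x) with ((-1) * / x) by ring. rewrite Rpow_mult_distr.
    replace (k + S (k + 0) + 1)%nat with (2 * S k)%nat by lia. rewrite pow_1_even.
    replace (n + S (k + S (k + 0)) + 1)%nat with (n + 1 + 2 * S k)%nat by lia.
    rewrite <- !pow_inv. rewrite !pow_add, pow_1.
    field. auto.
  - replace (2 * 0 + 1 + (n - 1))%nat with n by lia.
    set (A := INR (Factorial.fact (n - 1))). set (B := INR (Factorial.fact n)).
    unfold scal, plus, opp; simpl. unfold mult; simpl.
    assert (E1 := pow_ratio x 1 n Hx0 ltac:(lra)).
    assert (E2 := pow_ratio x (-1) n Hx0 ltac:(lra)).
    replace (x - -1) with (x + 1) in E2 by ring.
    replace (1 - -1 / x) with (1 - - / x) in E2 by (field; auto).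
    replace (1 - 1 / x) with (1 - / x) in E1 by (field; auto).
    rewrite <- E1, <- E2.
    assert (x ^ n <> 0) by (apply pow_nonzero; auto).
    assert ((1 - / x) ^ n <> 0) by (apply pow_nonzero; lra).
    assert ((1 - - / x) ^ n <> 0) by (apply pow_nonzero; lra).
    rewrite pow_add, pow_1. field. auto.
Qed.


Lemma part1 (n : nat) (Hn : (0 < n)%nat) (q : R) (Hq : 2 < q) :
     let a := fun k : nat =>
       2 ^ (S k) * INR (Factorial.fact (n + S k)) / INR (Factorial.fact (S k + 1))
       * zetaE (INR (n + S k + 1)) q in
     ex_series a /\
     Derive_n psiE n q =
       / 2 * (-1) ^ (n + 1) * INR (Factorial.fact (n - 1))
         * (/ (q - 2) ^ n - / (q - 1) ^ n)
       + (-1) ^ n * Series a.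
Proof.
  intro a.
  set (A := INR (Factorial.fact (n - 1))). set (B := INR (Factorial.fact n)).
  set (G := fun m : nat => / 2 * (A * (/ (INR m + q - 2)^n - / (INR m + q)^n)
            - 2 * B * / (INR m + q) ^ (n + 1))).
  set (L := / 2 * (A * (Z n (q - 2) - Z n q) - 2 * B * Z (n + 1) q)).
  assert (HG : forall m, is_series (fun k => 2 ^ (S k) * INR (Factorial.fact (n + S k)) / INR (Factorial.fact (S k + 1))
                       * / (INR m + q) ^ (n + S k + 1)) (G m)).
  { intro m. apply coef1; auto. pose proof (pos_INR m); lra. }
  assert (HL : is_series (fun m => (-1)^m * G m) L).
  { destruct (Z_props n (q - 2) ltac:(lra) Hn) as [H1 _].
    destruct (Z_props n q ltac:(lra) Hn) as [H2 _].
    destruct (Z_props (n + 1) q ltac:(lra) ltac:(lia)) as [H3 _].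
    pose proof (is_series_scal_l (/2) _ _ (is_series_minus _ _ _ _
       (is_series_scal_l A _ _ (is_series_minus _ _ _ _ H1 H2))
       (is_series_scal_l (2 * B) _ _ H3))) as H.
    unfold L. match type of H with is_series _ ?v => match goal with |- is_series _ ?w => replace w with v end end.
    - eapply is_series_ext; [|exact H]. intro m. cbv beta. unfold G, zs, scal, plus, opp; simpl. unfold mult; simpl.
      replace (INR m + q - 2) with (INR m + (q - 2)) by ring. ring.
    - unfold scal, plus, opp; simpl. unfold mult; simpl. ring. }
  assert (Hk : is_series (fun k => 2 ^ (S k) * INR (Factorial.fact (n + S k)) / INR (Factorial.fact (S k + 1))
                       * Z (n + S k + 1) q) L).
  { apply (key (fun k => 2 ^ (S k) * INR (Factorial.fact (n + S k)) / INR (Factorial.fact (S k + 1)))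
              (fun k => (n + S k + 1)%nat) q G L); auto; try lra.
    - intro j. apply Rmult_le_pos. apply Rmult_le_pos. apply pow_le; lra. apply pos_INR.
      left; apply Rinv_0_lt_compat, INR_fact_lt_0.
    - intro; lia. }
  assert (Ha : is_series a L).
  { eapply is_series_ext; [|exact Hk]. intro k. unfold a. rewrite zetaE_Z by lra. reflexivity. }
  split. { exists L; exact Ha. }
  rewrite (is_series_unique _ _ Ha), Dn_psi by lra.
  unfold L.
  rewrite (Z_shift n (q - 2)) by (lra || lia).
  replace (q - 2 + 1) with (q - 1) by ring.
  rewrite (Z_shift n (q - 1)) by (lra || lia).
  replace (q - 1 + 1) with q by ring.
  replace (n + 1)%nat with (S n) by lia. fold B. simpl pow. field. split; apply pow_nonzero; lra.
Qed.

Lemma part2 (n : nat) (Hn : (0 < n)%nat) (q : R) (Hq : 1 < q) :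
     let b := fun k : nat =>
       INR (Factorial.fact (n + 2 * S k)) / INR (Factorial.fact (2 * S k + 1))
       * zetaE (INR (n + 2 * S k + 1)) q in
     ex_series b /\
     Derive_n psiE n q =
       / 2 * (-1) ^ (n + 1) * INR (Factorial.fact (n - 1))
         * (/ (q - 1) ^ n - / q ^ n)
       + (-1) ^ n * Series b.
Proof.
  intro b.
  set (A := INR (Factorial.fact (n - 1))). set (B := INR (Factorial.fact n)).
  set (G := fun m : nat => / 2 * A * (/ (INR m + q - 1)^n - / (INR m + q + 1)^n)
            - B * / (INR m + q) ^ (n + 1)).
  set (L := / 2 * A * (Z n (q - 1) - Z n (q + 1)) - B * Z (n + 1) q).
  assert (HG : forall m, is_series (fun k => INR (Factorial.fact (n + 2 * S k)) / INR (Factorial.fact (2 * S k + 1))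
                       * / (INR m + q) ^ (n + 2 * S k + 1)) (G m)).
  { intro m. apply coef2; auto. pose proof (pos_INR m); lra. }
  assert (HL : is_series (fun m => (-1)^m * G m) L).
  { destruct (Z_props n (q - 1) ltac:(lra) Hn) as [H1 _].
    destruct (Z_props n (q + 1) ltac:(lra) Hn) as [H2 _].
    destruct (Z_props (n + 1) q ltac:(lra) ltac:(lia)) as [H3 _].
    pose proof (is_series_minus _ _ _ _
       (is_series_scal_l (/ 2 * A) _ _ (is_series_minus _ _ _ _ H1 H2))
       (is_series_scal_l B _ _ H3)) as H.
    unfold L. match type of H with is_series _ ?v => match goal with |- is_series _ ?w => replace w with v end end.
    - eapply is_series_ext; [|exact H]. intro m. cbv beta. unfold G, zs, scal, plus, opp; simpl. unfold mult; simpl.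
      replace (INR m + q - 1) with (INR m + (q - 1)) by ring.
      replace (INR m + q + 1) with (INR m + (q + 1)) by ring. ring.
    - unfold scal, plus, opp; simpl. unfold mult; simpl. ring. }
  assert (Hk : is_series (fun k => INR (Factorial.fact (n + 2 * S k)) / INR (Factorial.fact (2 * S k + 1))
                       * Z (n + 2 * S k + 1) q) L).
  { apply (key (fun k => INR (Factorial.fact (n + 2 * S k)) / INR (Factorial.fact (2 * S k + 1)))
              (fun k => (n + 2 * S k + 1)%nat) q G L); auto; try lra.
    - intro j. apply Rmult_le_pos. apply pos_INR.
      left; apply Rinv_0_lt_compat, INR_fact_lt_0.
    - intro; lia. }
  assert (Hb : is_series b L).
  { eapply is_series_ext; [|exact Hk]. intro k. unfold b. rewrite zetaE_Z by lra. reflexivity. }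
  split. { exists L; exact Hb. }
  rewrite (is_series_unique _ _ Hb), Dn_psi by lra.
  unfold L.
  rewrite (Z_shift n (q - 1)) by (lra || lia).
  replace (q - 1 + 1) with q by ring.
  rewrite (Z_shift n q) by (lra || lia).
  replace (n + 1)%nat with (S n) by lia. fold B. simpl pow. field. repeat split; apply pow_nonzero; lra.
Qed.


Theorem proposition3p20 (n : nat) (Hn : (0 < n)%nat) :
  (forall q : R, 2 < q ->
     let a := fun k : nat =>
       2 ^ (S k) * INR (Factorial.fact (n + S k)) / INR (Factorial.fact (S k + 1))
       * zetaE (INR (n + S k + 1)) q in
     ex_series a /\
     Derive_n psiE n q =
       / 2 * (-1) ^ (n + 1) * INR (Factorial.fact (n - 1))
         * (/ (q - 2) ^ n - / (q - 1) ^ n)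
       + (-1) ^ n * Series a)
  /\
  (forall q : R, 1 < q ->
     let b := fun k : nat =>
       INR (Factorial.fact (n + 2 * S k)) / INR (Factorial.fact (2 * S k + 1))
       * zetaE (INR (n + 2 * S k + 1)) q in
     ex_series b /\
     Derive_n psiE n q =
       / 2 * (-1) ^ (n + 1) * INR (Factorial.fact (n - 1))
         * (/ (q - 1) ^ n - / q ^ n)
       + (-1) ^ n * Series b).
Proof.
  split; intros q Hq; [apply part1|apply part2]; auto.
Qed.
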